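(* Let $(D=(V,A),c,r,K)$ be an instance of the node-weighted Directed Steiner Tree problem, $n=|V|$, and let $(x,f)$ be a feasible solution of (LP-DST). Let $S=\{v\in V:x_v>0\}$, $U=\{v\in V:x_v\ge1/\sqrt n\}$, $U'=S\setminus U$, and let $EX$ be the set of terminals $t\in K$ for which there is no directed path from $r$ to $t$ in $D[U]$. For $t\in EX$ let $X_t$ be the set of vertices $w\in U'$ such that there is a directed path from $w$ to $t$ in $D[U\cup\{w\}]$. Then $|X_t|\ge\sqrt n$ for every $t\in EX$.
   Context: For $v\in V$, $\mathcal P_v$ denotes the set of simple directed paths in $D$ from $r$ to $v$. (LP-DST) has variables $x_v$ ($v\in V$) and $f^t_P$ ($t\in K$, $P\in\mathcal P_t$) and constraints: $\sum_{P\in\mathcal P_t}f^t_P=1$ for all $t\in K$; $\sum_{P\in\mathcal P_t: v\in P}f^t_P\le x_v$ for all $v\in V$, $t\in K$; $0\le x_v\le 1$; $0\le f^t_P\le 1$ (objective: minimize $\sum_v x_vc(v)$). $D[W]$ is the subgraph induced by $W$. *)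

(* Defs.v *)
From HB Require Import structures.
From mathcomp Require Import all_boot all_order all_algebra.
Set Implicit Arguments. Unset Strict Implicit. Unset Printing Implicit Defensive.
Import Order.TTheory GRing.Theory Num.Theory.
Local Open Scope ring_scope.

Section DST.
Variable V : finType.

(* Directed paths are represented by their full vertex sequence
   [:: v0; v1; ...; vk]. *)
Definition is_simple_path (e : rel V) (r v : V) (p : seq V) : bool :=
  if p is x :: q then
    [&& x == r, path e x q, last x q == v & uniq p]
  else false.

(* All sequences over V of length at most #|V| (simple paths have at most
   #|V| vertices). *)
Definition short_seqs : seq (seq V) :=
  undup (flatten [seq [seq tval t | t : k.-tuple V] | k <- iota 0 #|V|.+1]).

Definition simple_paths (e : rel V) (r v : V) : seq (seq V) :=
  [seq p <- short_seqs | is_simple_path e r v p].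

Definition induced (e : rel V) (W : {set V}) : rel V :=
  [rel u w | [&& u \in W, w \in W & e u w]].

Definition reach_in (e : rel V) (W : {set V}) (a b : V) : bool :=
  [&& a \in W, b \in W & connect (induced e W) a b].

(* Feasibility of (x, f) for (LP-DST); f t P is the variable f^t_P. *)
Definition LP_DST_feasible (R : realFieldType) (e : rel V) (r : V)
    (K : {set V}) (x : V -> R) (f : V -> seq V -> R) : Prop :=
  [/\ forall t, t \in K -> \sum_(P <- simple_paths e r t) f t P = 1,
      forall v t, t \in K ->
        \sum_(P <- simple_paths e r t | v \in P) f t P <= x v,
      forall v, 0 <= x v <= 1 &
      forall t P, t \in K -> P \in simple_paths e r t -> 0 <= f t P <= 1].

End DST.

(* Main.v *)
Require Import Defs.
From HB Require Import structures.
From mathcomp Require Import all_boot all_order all_algebra.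
Import Order.TTheory GRing.Theory Num.Theory.
Local Open Scope ring_scope.

Lemma path_induced (V : finType) (e : rel V) (W : {set V}) (a : V) (q : seq V) :
  a \in W -> all (fun v => v \in W) q -> path e a q -> path (induced e W) a q.
Proof.
elim: q a => [//|b q IH] a aW /= /andP[bW aq] /andP[eab pq].
by rewrite /induced /= aW bW eab /= IH.
Qed.

Lemma last_out (V : finType) (e : rel V) (U : {set V}) (a : V) (q : seq V) :
  path e a q -> has (fun v => v \notin U) (a :: q) ->
  exists w, [/\ w \in a :: q, w \notin U, last a q \in w |: U &
               connect (induced e (w |: U)) w (last a q)].
Proof.
elim: q a => [|b q IH] a /=.
  move=> _; rewrite orbF => aU; exists a; split.
  - by rewrite mem_seq1.
  - by [].
  - by rewrite setU11.
  - exact: connect0.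
move=> /andP[eab pq] /orP[aU|hq].
  case hb: (has (fun v => v \notin U) (b :: q)).
    have [w [w1 w2 w3 w4]] := IH b pq hb.
    by exists w; split => //; rewrite inE w1 orbT.
  move/negbT: hb; rewrite -all_predC => /allP hb.
  have inW : forall v, v \in b :: q -> v \in a |: U.
    by move=> v /hb /= /negPn vU; rewrite inE vU orbT.
  exists a; split => //.
  - by rewrite inE eqxx.
  - by apply: inW; rewrite mem_last.
  apply/connectP; exists (b :: q) => //.
  apply: path_induced.
  - by rewrite setU11.
  - by apply/allP => v vin; apply: inW.
  - by rewrite /= eab pq.
have [w [w1 w2 w3 w4]] := IH b pq hq.
by exists w; split => //; rewrite inE w1 orbT.
Qed.

Theorem claim1 (R : rcfType) (V : finType) (e : rel V) (c : V -> R)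
    (r : V) (K : {set V}) (x : V -> R) (f : V -> seq V -> R) :
  LP_DST_feasible e r K x f ->
  let n := #|V| in
  let S := [set v | 0 < x v] in
  let U := [set v | (Num.sqrt (n%:R : R))^-1 <= x v] in
  let U' := S :\: U in
  let EX := [set t in K | ~~ reach_in e U r t] in
  forall t, t \in EX ->
    let X_t := [set w in U' | reach_in e (w |: U) w t] in
    Num.sqrt (n%:R : R) <= (#|X_t|)%:R.
Proof.
move=> [h1 h2 h3 h4] n S U U' EX t tEX.
change (Num.sqrt (n%:R : R) <= #|[set w in U' | reach_in e (w |: U) w t]|%:R).
set X := [set w in U' | reach_in e (w |: U) w t].
have tK : t \in K by move: tEX; rewrite inE => /andP[].
have nR : ~~ reach_in e U r t by move: tEX; rewrite inE => /andP[].
set s := Num.sqrt (n%:R : R).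
have s0 : 0 < s.
  rewrite sqrtr_gt0 ltr0n /n; apply/card_gt0P; by exists r.
set sp := simple_paths e r t.
have key : forall P, P \in sp -> 0 < f t P -> exists2 w, w \in X & w \in P.
  move=> P Psp fP.
  have allS : forall v, v \in P -> 0 < x v.
    move=> v vP; apply: lt_le_trans fP _; apply: le_trans (h2 v t tK).
    rewrite (big_rem P) //= vP; rewrite lerDl.
    rewrite big_seq_cond; apply: sumr_ge0 => P' /andP[/mem_rem P'in _].
    by case/andP: (h4 t P' tK P'in).
  move: Psp; rewrite mem_filter => /andP[+ _].
  case: P allS fP => [//|a q] allS _ /and4P[/eqP ar pq /eqP lq _].
  have hasq : has (fun v => v \notin U) (a :: q).
    apply/negP => /negP; rewrite -all_predC => /allP hb.
    have inU : forall v, v \in a :: q -> v \in U.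
      by move=> v /hb /= /negPn.
    apply: (negP nR); rewrite /reach_in -ar -lq.
    rewrite !inU ?mem_last ?inE ?eqxx //=.
    apply/connectP; exists q => //; apply: path_induced => //.
    - by rewrite inU // inE eqxx.
    - by apply/allP => v vin; apply: inU; rewrite inE vin orbT.
  have [w [w1 w2 w3 w4]] := @last_out _ e U a q pq hasq.
  exists w => //.
  rewrite inE /U' inE /S inE (allS w w1) w2 /= -lq /reach_in setU11 w3 w4.
  done.
have Xlt : forall w, w \in X -> x w <= s^-1.
  move=> w; rewrite !inE => /andP[/andP[+ _] _].
  by rewrite -ltNge => /ltW.
have H : 1 <= s^-1 *+ #|X|.
  rewrite -(h1 t tK) -sumr_const.
  apply: le_trans (_ : \sum_(w in X) \sum_(P <- sp | w \in P) f t P <= _); last first.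
    by apply: ler_sum => w wX; apply: le_trans (h2 w t tK) (Xlt w wX).
  under [X in _ <= X]eq_bigr do rewrite big_mkcond.
  rewrite exchange_big /= big_seq [X in _ <= X]big_seq.
  apply: ler_sum => P Psp.
  have [f0|fP] := leP (f t P) 0.
    apply: le_trans f0 _; apply: sumr_ge0 => w _; case: ifP => // _.
    by case/andP: (h4 t P tK Psp).
  have [w wX wP] := key P Psp fP.
  rewrite (bigD1 w) //= wP lerDl; apply: sumr_ge0 => w' _; case: ifP => // _.
  by case/andP: (h4 t P tK Psp).
have -> : (#|X|%:R : R) = (s^-1 *+ #|X|) * s.
  by rewrite mulrnAl mulVf ?gt_eqF.
by rewrite -{1}(mul1r s) ler_pM2r.
Qed.
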